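(* Let $N\ge1$ and $n\ge1$, and let $\mathbf A_1,\dots,\mathbf A_N$ be real $n\times n$ matrices with $\|\mathbf A_i\|_\infty\le 1/4$ for all $i$. Suppose that the Gauss differentiation matrix $\mathbf D_{1:N}$ is invertible with $\|\mathbf D_{1:N}^{-1}\|_\infty\le2$. Then for each $\mathbf q\in\mathbb R^n$ and $\mathbf p=(\mathbf p_1,\dots,\mathbf p_N)\in\mathbb R^{nN}$ with $\mathbf p_i\in\mathbb R^n$, the linear system $$\sum_{j=1}^ND_{ij}\mathbf X_j-\mathbf A_i\mathbf X_i=\mathbf p_i\ (1\le i\le N),\qquad \mathbf X_{N+1}-\sum_{j=1}^N\omega_j\mathbf A_j\mathbf X_j=\mathbf q$$ has a unique solution $\mathbf X_j\in\mathbb R^n$, $1\le j\le N+1$, and this solution satisfies $\|\mathbf X_j\|_\infty\le 4\|\mathbf p\|_\infty+\|\mathbf q\|_\infty$ for $1\le j\le N+1$.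
   Context: $-1<\tau_1<\dots<\tau_N<1$ are the $N$ Gauss quadrature abscissas (roots of the degree-$N$ Legendre polynomial), $\omega_1,\dots,\omega_N>0$ the Gauss weights (summing to 2), $\tau_0=-1$. $D_{ij}=\dot L_j(\tau_i)$ for $1\le i\le N$, $0\le j\le N$, where $L_j(\tau)=\prod_{k=0,k\ne j}^N\frac{\tau-\tau_k}{\tau_j-\tau_k}$; $\mathbf D_{1:N}=(D_{ij})_{1\le i,j\le N}$. For a vector, $\|\cdot\|_\infty$ is the maximum absolute entry; for a matrix it is the largest absolute row sum (the induced norm). *)

(* Defs.v *)
From HB Require Import structures.
From mathcomp Require Import all_boot all_order all_algebra.
From mathcomp Require Import reals.
Set Implicit Arguments. Unset Strict Implicit. Unset Printing Implicit Defensive.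
Import Order.TTheory GRing.Theory Num.Theory.
Local Open Scope ring_scope.

Section Defs.
Variable R : realType.

Definition legendre (N : nat) : {poly R} :=
  ((2%:R ^+ N * (N`!)%:R)^-1) *: ((('X ^+ 2 - 1) ^+ N)^`(N)).

(* Integral over [-1,1] of a polynomial, computed from its coefficients:
   int_{-1}^{1} x^k dx = (1 - (-1)^(k+1)) / (k+1). *)
Definition int_m11 (p : {poly R}) : R :=
  \sum_(k < size p) p`_k * ((1 - (-1) ^+ k.+1) / (k.+1)%:R).

Definition lagr (m : nat) (t : 'I_m -> R) (j : 'I_m) : {poly R} :=
  \prod_(k < m | k != j) (('X - (t k)%:P) * ((t j - t k)^-1)%:P).

(* Nodes tau_0 = -1, tau_1 .. tau_N (tau given on 'I_N, 0-based) *)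
Definition ext_nodes (N : nat) (tau : 'I_N -> R) (k : 'I_N.+1) : R :=
  match unlift ord0 k with None => -1 | Some j => tau j end.

Definition gauss_weight (N : nat) (tau : 'I_N -> R) (j : 'I_N) : R :=
  int_m11 (lagr tau j).

(* D_{1:N}: entries D_ij = L_j'(tau_i), 1 <= i,j <= N, with L_j the Lagrange
   basis on tau_0 = -1, tau_1, ..., tau_N *)
Definition Dmat (N : nat) (tau : 'I_N -> R) : 'M[R]_N :=
  \matrix_(i < N, j < N) ((lagr (ext_nodes tau) (lift ord0 j))^`()).[tau i].

Definition vnorm (n : nat) (v : 'cV[R]_n) : R := \big[Num.max/0]_(i < n) `|v i 0|.
Definition mnorm (m n : nat) (A : 'M[R]_(m, n)) : R :=
  \big[Num.max/0]_(i < m) \sum_(j < n) `|A i j|.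
Definition bvnorm (N n : nat) (p : 'I_N -> 'cV[R]_n) : R :=
  \big[Num.max/0]_(i < N) vnorm (p i).

End Defs.

(* Main.v *)
Require Import Defs.
From HB Require Import structures.
From mathcomp Require Import all_boot all_order all_algebra.
From mathcomp Require Import reals.
From mathcomp Require Import polyrcf ring lra zify.
Import Order.TTheory GRing.Theory Num.Theory.
Local Open Scope ring_scope.

Section Norms.
Variable R : realType.

Lemma vnorm_ge0 n (v : 'cV[R]_n) : 0 <= vnorm v.
Proof. by rewrite /vnorm; elim/big_ind: _ => // x y hx hy; rewrite le_max hx. Qed.

Lemma vnorm_entry n (v : 'cV[R]_n) i : `|v i 0| <= vnorm v.
Proof. exact: (le_bigmax _ (fun i => `|v i 0|) i). Qed.

Lemma vnorm_le n (v : 'cV[R]_n) M : 0 <= M -> (forall i, `|v i 0| <= M) -> vnorm v <= M.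
Proof. by move=> h0 h; apply: bigmax_le. Qed.

Lemma bvnorm_ge0 N n (p : 'I_N -> 'cV[R]_n) : 0 <= bvnorm p.
Proof. by rewrite /bvnorm; elim/big_ind: _ => // [x y hx hy|i _]; rewrite ?le_max ?hx ?vnorm_ge0. Qed.

Lemma bvnorm_entry N n (p : 'I_N -> 'cV[R]_n) i : vnorm (p i) <= bvnorm p.
Proof. exact: (le_bigmax _ (fun i => vnorm (p i)) i). Qed.

Lemma bvnorm_le N n (p : 'I_N -> 'cV[R]_n) M : 0 <= M -> (forall i, vnorm (p i) <= M) -> bvnorm p <= M.
Proof. by move=> h0 h; apply: bigmax_le. Qed.

Lemma mnorm_row m n (A : 'M[R]_(m, n)) i : \sum_j `|A i j| <= mnorm A.
Proof. exact: (le_bigmax _ (fun i => \sum_j `|A i j|) i). Qed.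

Lemma mnorm_ge0 m n (A : 'M[R]_(m, n)) : 0 <= mnorm A.
Proof. by rewrite /mnorm; elim/big_ind: _ => // [x y hx hy|i _]; rewrite ?le_max ?hx // sumr_ge0. Qed.

Lemma vnormD n (u v : 'cV[R]_n) : vnorm (u + v) <= vnorm u + vnorm v.
Proof.
apply: vnorm_le; first by rewrite addr_ge0 ?vnorm_ge0.
move=> i; rewrite mxE; apply: (le_trans (ler_normD _ _)).
by rewrite lerD ?vnorm_entry.
Qed.

Lemma vnormN n (u : 'cV[R]_n) : vnorm (- u) = vnorm u.
Proof. by rewrite /vnorm; apply: eq_bigr => i _; rewrite mxE normrN. Qed.

Lemma vnormZ n (c : R) (u : 'cV[R]_n) : vnorm (c *: u) <= `|c| * vnorm u.
Proof.
apply: vnorm_le; first by rewrite mulr_ge0 ?vnorm_ge0.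
by move=> i; rewrite mxE normrM ler_wpM2l ?vnorm_entry.
Qed.

Lemma vnorm_mul n (A : 'M[R]_n) (u : 'cV[R]_n) : vnorm (A *m u) <= mnorm A * vnorm u.
Proof.
apply: vnorm_le; first by rewrite mulr_ge0 ?vnorm_ge0 ?mnorm_ge0.
move=> i; rewrite mxE; apply: (le_trans (ler_norm_sum _ _ _)).
apply: (@le_trans _ _ (\sum_j `|A i j| * vnorm u)).
  by apply: ler_sum => j _; rewrite normrM ler_wpM2l ?vnorm_entry.
by rewrite -mulr_suml ler_wpM2r ?vnorm_ge0 ?mnorm_row.
Qed.

Lemma vnorm_sum N n (F : 'I_N -> 'cV[R]_n) : vnorm (\sum_j F j) <= \sum_j vnorm (F j).
Proof.
elim/big_ind2: _ => //.
  by apply: vnorm_le => // i; rewrite mxE normr0.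
move=> x1 x2 y1 y2 h1 h2; apply: le_trans; first exact: vnormD. by rewrite lerD.
Qed.

Lemma vnorm_eq0 n (v : 'cV[R]_n) : vnorm v <= 0 -> v = 0.
Proof.
move=> h; apply/matrixP => i j; rewrite (ord1 j) mxE.
by apply/normr0_eq0/le_anti; rewrite normr_ge0 (le_trans (vnorm_entry _ v i)).
Qed.

End Norms.

Section Sys.
Variables (R : realType) (N n : nat) (D : 'M[R]_N) (A : 'I_N -> 'M[R]_n).
Hypothesis Dunit : D \in unitmx.
Hypothesis Dinv : mnorm (invmx D) <= 2.
Hypothesis Anorm : forall i, mnorm (A i) <= 1 / 4.

Lemma sys_bound (Z P : 'I_N -> 'cV[R]_n) :
  (forall i, \sum_j D i j *: Z j - A i *m Z i = P i) -> bvnorm Z <= 4 * bvnorm P.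
Proof.
move=> H.
pose Q i := P i + A i *m Z i.
have HQ i : \sum_j D i j *: Z j = Q i by rewrite /Q -H subrK.
have HZ k : Z k = \sum_i invmx D k i *: Q i.
  under eq_bigr do rewrite -HQ scaler_sumr.
  rewrite exchange_big /=.
  under eq_bigr do under eq_bigr do rewrite scalerA.
  under eq_bigr do rewrite -scaler_suml.
  have E j : \sum_i invmx D k i * D i j = (k == j)%:R.
    have := congr1 (fun M : 'M[R]_N => M k j) (mulVmx Dunit).
    by rewrite /= !mxE.
  rewrite (eq_bigr (fun j => (k == j)%:R *: Z j)); last by move=> j _; rewrite E.
  rewrite (bigD1 k) //= eqxx scale1r big1 ?addr0 // => j hj.
  by rewrite eq_sym (negbTE hj) scale0r.
set b := bvnorm Z; set c := bvnorm P.
have hb0 : 0 <= b by apply: bvnorm_ge0.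
have hc0 : 0 <= c by apply: bvnorm_ge0.
have HQb i : vnorm (Q i) <= c + 1/4 * b.
  apply: le_trans; first exact: vnormD.
  rewrite lerD ?bvnorm_entry //; apply: le_trans; first exact: vnorm_mul.
  by apply: ler_pM; rewrite ?mnorm_ge0 ?vnorm_ge0 ?bvnorm_entry.
have : b <= 2 * (c + 1/4 * b).
  apply: bvnorm_le; first by lra.
  move=> k; rewrite HZ; apply: le_trans; first exact: vnorm_sum.
  apply: (@le_trans _ _ (\sum_i `|invmx D k i| * (c + 1/4 * b))).
    apply: ler_sum => i _; apply: le_trans; first exact: vnormZ.
    by rewrite ler_wpM2l.
  rewrite -mulr_suml ler_wpM2r ?addr_ge0 ?mulr_ge0 //.
    by rewrite invr_ge0.
  apply: le_trans Dinv; exact: mnorm_row.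
move=> h; lra.
Qed.

End Sys.

Section Exist.
Variables (R : realType) (N n : nat) (D : 'M[R]_N) (A : 'I_N -> 'M[R]_n).

Definition Lmap (M : 'M[R]_(n, N)) : 'M[R]_(n, N) :=
  \matrix_(r, i) (\sum_j D i j * M r j - \sum_k A i r k * M k i).

Lemma sum_lin I (c x y : I -> R) (a : R) (F : seq I) :
  \sum_(j <- F) c j * (a * x j + y j) = a * \sum_(j <- F) c j * x j + \sum_(j <- F) c j * y j.
Proof. by rewrite mulr_sumr -big_split; apply: eq_bigr => j _ /=; ring. Qed.

Lemma Lmap_linear : linear Lmap.
Proof.
move=> a M1 M2; apply/matrixP => r i; rewrite !mxE.
rewrite (eq_bigr (fun j => D i j * (a * M1 r j + M2 r j))); last by move=> j _; rewrite !mxE.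
rewrite (eq_bigr (fun k => A i r k * (a * M1 k i + M2 k i))); last by move=> k _; rewrite !mxE.
rewrite (sum_lin _ (fun j => D i j) (fun j => M1 r j) (fun j => M2 r j)).
rewrite (sum_lin _ (fun k => A i r k) (fun k => M1 k i) (fun k => M2 k i)).
ring.
Qed.

HB.instance Definition _ := GRing.isLinear.Build R 'M[R]_(n, N) 'M[R]_(n, N) _ Lmap Lmap_linear.

Lemma Lmap_surj : (forall M, Lmap M = 0 -> M = 0) -> forall T, exists M, Lmap M = T.
Proof.
move=> inj T.
have Ku : lin_mx Lmap \in unitmx.
  rewrite -row_free_unit; apply: inj_row_free => v hv.
  have : Lmap (vec_mx v) = 0 by rewrite -mx_rV_lin hv linear0.
  by move/inj => h; rewrite -(vec_mxK v) h linear0.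
exists (vec_mx (mxvec T *m invmx (lin_mx Lmap))).
by rewrite -mx_rV_lin mulmxKV // mxvecK.
Qed.

End Exist.

Section Int.
Variable R : realType.
Implicit Types p q : {poly R}.

Definition cst (k : nat) : R := (1 - (-1) ^+ k.+1) / (k.+1)%:R.

Lemma int_big m p : (size p <= m)%N -> int_m11 p = \sum_(k < m) p`_k * cst k.
Proof.
move=> hm; rewrite /int_m11 (big_ord_widen m (fun k => p`_k * cst k)) //.
rewrite big_mkcond; apply: eq_bigr => k _; case: ifP => // /negbT.
by rewrite -leqNgt => h; rewrite nth_default // mul0r.
Qed.

Lemma int0 : int_m11 (0 : {poly R}) = 0.
Proof. by rewrite /int_m11 size_poly0 big_ord0. Qed.

Lemma intD p q : int_m11 (p + q) = int_m11 p + int_m11 q.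
Proof.
pose m := maxn (size p) (size q).
rewrite !(@int_big m) ?leq_maxl ?leq_maxr ?(leq_trans (size_polyD _ _)) //.
by rewrite -big_split; apply: eq_bigr => k _; rewrite coefD mulrDl.
Qed.

Lemma intZ c p : int_m11 (c *: p) = c * int_m11 p.
Proof.
rewrite !(@int_big (size p)) ?size_scale_leq // mulr_sumr.
by apply: eq_bigr => k _; rewrite coefZ mulrA.
Qed.

Lemma intN p : int_m11 (- p) = - int_m11 p.
Proof. by rewrite -scaleN1r intZ mulN1r. Qed.

Lemma intB p q : int_m11 (p - q) = int_m11 p - int_m11 q.
Proof. by rewrite intD intN. Qed.

Lemma int_sum I (r : seq I) (F : I -> {poly R}) :
  int_m11 (\sum_(i <- r) F i) = \sum_(i <- r) int_m11 (F i).
Proof.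
elim: r => [|x r IH]; first by rewrite !big_nil int0.
by rewrite !big_cons intD IH.
Qed.

Lemma int1 : int_m11 (1 : {poly R}) = 2.
Proof.
rewrite /int_m11 size_poly1 big_ord1 coefC /= /cst; lra.
Qed.

Lemma int_deriv p : int_m11 p^`() = p.[1] - p.[-1].
Proof.
have hs : (size p^`() <= size p)%N.
  have [->|pn0] := eqVneq p 0; first by rewrite deriv0.
  exact/ltnW/lt_size_deriv.
rewrite (@int_big (size p) _ hs) !(@horner_coef_wide _ (size p).+1) //.
rewrite -sumrB big_ord_recl /= !expr0 subrr add0r.
apply: eq_bigr => k _; rewrite coef_deriv /cst /bump /= -mulr_natr.
have hk : (k.+1)%:R != 0 :> R by rewrite pnatr_eq0.
by rewrite expr1n; field; rewrite addrC natr1.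
Qed.

Definition prim p : {poly R} := \poly_(i < (size p).+1) (p`_i.-1 / i%:R).

Lemma prim_deriv p : (prim p)^`() = p.
Proof.
apply/polyP => i; rewrite coef_deriv coef_poly /=.
case: ifP => hi.
  have hk : (i.+1)%:R != 0 :> R by rewrite pnatr_eq0.
  by rewrite -(mulr_natr (p`_i / _)) mulfVK.
by rewrite mul0rn nth_default // leqNgt -ltnS hi.
Qed.

Lemma int_sqr_ge0 p : 0 <= int_m11 (p * p).
Proof.
rewrite -(prim_deriv (p * p)) int_deriv subr_ge0.
apply: (@ler_hornerW _ (-1) 1); last by lra.
- by move=> x _; rewrite prim_deriv hornerM -expr2 sqr_ge0.
- by rewrite in_itv /=; apply/andP; split; lra.
- by rewrite in_itv /=; apply/andP; split; lra.
Qed.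

End Int.

Section Leg.
Variable R : realType.
Implicit Types p q g : {poly R}.

Lemma derivn_factor (a : R) m g k : (k <= m)%N ->
  exists h, (('X - a%:P) ^+ m * g)^`(k) = ('X - a%:P) ^+ (m - k) * h.
Proof.
elim: k => [|k IH] hk; first by exists g; rewrite subn0.
have [h Eh] := IH (ltnW hk).
rewrite -(subnSK hk) in Eh.
exists (h *+ (m - k.+1).+1 + ('X - a%:P) * h^`()).
rewrite derivnS Eh derivM deriv_exp derivXsubC mul1r /= exprS.
by rewrite mulrDr mulrnAl mulrnAr mulrA [_ * ('X - a%:P)]mulrC.
Qed.

Definition uN (N : nat) : {poly R} := ('X ^+ 2 - 1) ^+ N.

Lemma uN_fact N : uN N = ('X - 1%:P) ^+ N * ('X - (-1)%:P) ^+ N.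
Proof. by rewrite /uN -exprMn; congr (_ ^+ _); rewrite polyCN opprK; ring. Qed.

Lemma uN_derivn_pm1 N k : (k < N)%N -> (uN N)^`(k).[1] = 0 /\ (uN N)^`(k).[-1] = 0.
Proof.
move=> hk; split.
  have [h Eh] := @derivn_factor 1 N (('X - (-1)%:P) ^+ N) k (ltnW hk).
  by rewrite uN_fact Eh hornerM horner_exp hornerXsubC subrr expr0n subn_eq0 leqNgt hk mul0r.
have [h Eh] := @derivn_factor (-1) N (('X - 1%:P) ^+ N) k (ltnW hk).
rewrite uN_fact mulrC Eh.
by rewrite hornerM horner_exp hornerXsubC subrr expr0n subn_eq0 leqNgt hk mul0r.
Qed.

Lemma uN_orth N k : (k <= N)%N -> forall q, (size q <= k)%N -> int_m11 ((uN N)^`(k) * q) = 0.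
Proof.
elim: k => [|k IH] hk q hq.
  by move: hq; rewrite leqn0 size_poly_eq0 => /eqP ->; rewrite mulr0 int0.
have E : (uN N)^`(k.+1) * q = ((uN N)^`(k) * q)^`() - (uN N)^`(k) * q^`().
  by rewrite derivM derivnS addrK.
have [h1 h2] := @uN_derivn_pm1 N k hk.
rewrite E intB int_deriv !hornerM h1 h2 !mul0r subrr IH ?subrr ?(ltnW hk) //.
have [->|qn0] := eqVneq q 0; first by rewrite deriv0 size_poly0.
by rewrite -ltnS (leq_trans (lt_size_deriv qn0)).
Qed.

Lemma legendre_orth N q : (size q <= N)%N -> int_m11 (legendre R N * q) = 0.
Proof. by move=> hq; rewrite /legendre -scalerAl intZ uN_orth // mulr0. Qed.

Lemma size_uN N : size (uN N) = (N + N).+1.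
Proof.
rewrite uN_fact size_monicM ?monic_neq0 ?monic_exp ?monicXsubC //.
by rewrite !size_exp_XsubC addSn addnS.
Qed.

Lemma lead_uN N : (uN N)`_(N + N) = 1.
Proof.
have : uN N \is monic by rewrite uN_fact monicMl ?monic_exp ?monicXsubC.
by move/monicP; rewrite /lead_coef size_uN.
Qed.

Lemma legendre_size N : legendre R N != 0 /\ (size (legendre R N) <= N.+1)%N.
Proof.
have c0 : ((2%:R ^+ N * (N`!)%:R)^-1 : R) != 0.
  by rewrite invr_eq0 mulf_neq0 ?expf_neq0 ?pnatr_eq0 // -lt0n fact_gt0.
split.
  apply/eqP => /(congr1 (fun p : {poly R} => p`_N)).
  rewrite /legendre coefZ coef_derivn lead_uN => /eqP.
  rewrite coef0. by rewrite mulf_eq0 (negbTE c0) pnatr_eq0 eqn0Ngt ffact_gt0 leq_addr.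
apply/leq_sizeP => j hj.
rewrite /legendre coefZ coef_derivn nth_default ?mul0rn ?mulr0 //.
by rewrite size_uN -addnS leq_add2l.
Qed.

End Leg.

Section Gauss.
Variables (R : realType) (N : nat) (tau : 'I_N -> R).
Hypothesis tau_incr : forall i j : 'I_N, (i < j)%N -> tau i < tau j.
Hypothesis N0 : (0 < N)%N.
Hypothesis tau_root : forall i : 'I_N, root (legendre R N) (tau i).

Lemma tau_inj : injective tau.
Proof.
move=> i j E; apply/val_inj/eqP; case: (ltngtP i j) => // h.
  by have := tau_incr _ _ h; rewrite E ltxx.
by have := tau_incr _ _ h; rewrite E ltxx.
Qed.

Let rs := map tau (enum 'I_N).
Let W : {poly R} := \prod_(z <- rs) ('X - z%:P).

Lemma rs_uniq : uniq rs.
Proof. by rewrite map_inj_uniq ?enum_uniq //; exact: tau_inj. Qed.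

Lemma size_W : size W = N.+1.
Proof. by rewrite size_prod_XsubC size_map size_enum_ord. Qed.

Lemma W_neq0 : W != 0.
Proof. by rewrite -size_poly_eq0 size_W. Qed.

Lemma W_factor (p : {poly R}) : (forall i, root p (tau i)) -> exists g, p = g * W.
Proof.
move=> hp; apply: uniq_roots_prod_XsubC; last by rewrite uniq_rootsE rs_uniq.
by apply/allP => z /mapP [i _ ->].
Qed.

Lemma size_factor (p g : {poly R}) : p = g * W -> (size p <= N + N)%N -> (size g <= N)%N.
Proof.
move=> -> hs; have [->|gn0] := eqVneq g 0; first by rewrite size_poly0.
move: hs; rewrite size_mul // ?W_neq0 // size_W addnS /= => h.
by rewrite -(leq_add2r N).
Qed.

Lemma W_orth (q : {poly R}) : (size q <= N)%N -> int_m11 (q * W) = 0.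
Proof.
move=> hq; have [g0 Eg] := @W_factor (legendre R N) tau_root.
have [Pn0 Ps] := legendre_size R N.
have g0n0 : g0 != 0 by apply: contraNneq Pn0 => h; rewrite Eg h mul0r.
have hg : (size g0 <= 1)%N.
  move: Ps; rewrite Eg size_mul // ?W_neq0 // size_W addnS /= => h.
  by rewrite -(leq_add2r N) add1n.
have Ec := size1_polyC hg.
have c0 : g0`_0 != 0 by apply: contraNneq g0n0 => h; rewrite Ec h.
have -> : W = (g0`_0)^-1 *: legendre R N.
  by rewrite Eg [X in _ *: (X * _)]Ec mul_polyC scalerA mulVf // scale1r.
by rewrite -scalerAr intZ [q * _]mulrC legendre_orth // mulr0.
Qed.

Lemma lagr_eval j k : (lagr tau j).[tau k] = (j == k)%:R.
Proof.
rewrite /lagr horner_prod.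
have [<-|hjk] := eqVneq j k.
  rewrite big1 // => i hi.
  rewrite hornerM hornerXsubC hornerC divff // subr_eq0.
  by apply: contra hi => /eqP /tau_inj ->.
rewrite (bigD1 k) 1?eq_sym //= hornerM hornerXsubC subrr !mul0r //.
Qed.

Lemma size_lagr j : (size (lagr tau j) <= N)%N.
Proof.
have dnz i : i != j -> (tau j - tau i)^-1 != 0.
  move=> hi; rewrite invr_eq0 subr_eq0.
  by apply: contra hi => /eqP /tau_inj ->.
have nz i : i != j -> ('X - (tau i)%:P) * (tau j - tau i)^-1%:P != 0.
  by move=> hi; rewrite mulf_neq0 ?polyXsubC_eq0 // polyC_eq0 dnz.
rewrite /lagr size_prod //.
rewrite (eq_bigr (fun _ => 2%N)); last first.
  move=> i hi; rewrite size_mul ?polyXsubC_eq0 ?polyC_eq0 ?dnz //.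
  by rewrite size_XsubC size_polyC dnz.
rewrite sum_nat_const.
have hc : #|(fun i : 'I_N => i != j)| = N.-1.
  rewrite -[in RHS](card_ord N) -(cardC1 j); apply: eq_card => i; by rewrite !inE.
rewrite hc; have := ltn_ord j; lia.
Qed.

Lemma sum_lagr : \sum_j lagr tau j = 1.
Proof.
apply/eqP; rewrite -subr_eq0; apply/eqP.
apply: (@poly_ltsp_roots _ _ rs); last first.
- apply/allP => z /mapP [k _ ->]; rewrite rootE hornerD hornerN hornerC.
  rewrite horner_sum (bigD1 k) //= lagr_eval eqxx big1 ?addr0 ?subrr //.
  by move=> i hi; rewrite lagr_eval (negbTE hi).
- exact: rs_uniq.
rewrite size_map size_enum_ord.
apply: leq_trans; first exact: size_polyD.
rewrite geq_max size_polyN size_poly1; apply/andP; split; last first.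
  exact: N0.
elim/big_ind: _ => //; first by rewrite size_poly0.
  by move=> x y hx hy; apply: leq_trans (size_polyD _ _) _; rewrite geq_max hx hy.
by move=> i _; apply: size_lagr.
Qed.

Lemma weight_sum : \sum_j gauss_weight tau j = 2.
Proof. by rewrite /gauss_weight -int_sum sum_lagr int1. Qed.

Lemma weight_ge0 j : 0 <= gauss_weight tau j.
Proof.
rewrite /gauss_weight.
pose l := lagr tau j.
have [g Eg] : exists g, l * l - l = g * W.
  apply: W_factor => k; rewrite rootE hornerD hornerN hornerM lagr_eval.
  by case: (j == k); rewrite ?mul1r ?mul0r subrr.
have hs : (size g <= N)%N.
  apply: (@size_factor _ g Eg).
  apply: leq_trans; first exact: size_polyD.
  rewrite geq_max size_polyN; apply/andP; split.
    apply: leq_trans; first exact: size_polyMleq.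
    have := size_lagr j; rewrite -/l; case: (size l) => //= m hm; lia.
  by apply: leq_trans (size_lagr j) _; rewrite leq_addr.
have := @W_orth g hs; rewrite -Eg intB => /eqP; rewrite subr_eq0 => /eqP <-.
exact: int_sqr_ge0.
Qed.

End Gauss.

Lemma Lmap_col (R : realType) (N n : nat) (D : 'M[R]_N) (A : 'I_N -> 'M[R]_n) M i :
  \sum_j D i j *: col j M - A i *m col i M = col i (Lmap R N n D A M).
Proof.
apply/matrixP => r c; rewrite (ord1 c) !mxE summxE.
under eq_bigr do rewrite !mxE.
congr (_ - _); apply: eq_bigr => k _; rewrite !mxE //.
Qed.

Lemma zero_sol (R : realType) (N n : nat) (D : 'M[R]_N) (A : 'I_N -> 'M[R]_n) :
  D \in unitmx -> mnorm (invmx D) <= 2 -> (forall i, mnorm (A i) <= 1 / 4) ->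
  forall Z : 'I_N -> 'cV[R]_n,
  (forall i, \sum_j D i j *: Z j - A i *m Z i = 0) -> forall j, Z j = 0.
Proof.
move=> Du Di An Z HZ j.
have := @sys_bound R N n D A Du Di An Z _ HZ.
have -> : bvnorm (fun _ : 'I_N => (0 : 'cV[R]_n)) = 0.
  apply/le_anti; rewrite bvnorm_ge0 andbT; apply: bvnorm_le => // i.
  by apply: vnorm_le => // k; rewrite mxE normr0.
rewrite mulr0 => h; apply: vnorm_eq0.
exact: le_trans (bvnorm_entry _ _ _ Z j) h.
Qed.

Lemma zmod_rearr (V : zmodType) (x y c d : V) : (x - y) - (c - d) = (x - c) - (y - d).
Proof. by rewrite !opprB addrACA [RHS]addrACA (addrC (- y)). Qed.

Theorem lemma4p1 (R : realType) (N n : nat) (tau : 'I_N -> R)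
  (A : 'I_N -> 'M[R]_n) :
  (0 < N)%N -> (0 < n)%N ->
  (* tau_1 < ... < tau_N are the roots of the degree-N Legendre polynomial *)
  (forall i j : 'I_N, (i < j)%N -> tau i < tau j) ->
  (forall i : 'I_N, root (legendre R N) (tau i)) ->
  (forall i, mnorm (A i) <= 1 / 4) ->
  Dmat tau \in unitmx ->
  mnorm (invmx (Dmat tau)) <= 2 ->
  forall (q : 'cV[R]_n) (p : 'I_N -> 'cV[R]_n),
  let sys (X : 'I_N -> 'cV[R]_n) (Y : 'cV[R]_n) :=
    (forall i : 'I_N,
        \sum_(j < N) Dmat tau i j *: X j - A i *m X i = p i) /\
    Y - \sum_(j < N) gauss_weight tau j *: (A j *m X j) = q in
  exists (X : 'I_N -> 'cV[R]_n) (Y : 'cV[R]_n),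
    [/\ sys X Y,
        (forall X' Y', sys X' Y' -> (forall j, X' j = X j) /\ Y' = Y),
        (forall j, vnorm (X j) <= 4 * bvnorm p + vnorm q)
      & vnorm Y <= 4 * bvnorm p + vnorm q].
Proof.
move=> N0 n0 tincr troot An Du Di q p sys.
set D := Dmat tau.
have inj : forall M, Lmap R N n D A M = 0 -> M = 0.
  move=> M HM.
  have HZ i : \sum_j D i j *: col j M - A i *m col i M = 0.
    by rewrite Lmap_col HM; apply/matrixP => r c; rewrite !mxE.
  have Z0 := @zero_sol R N n D A Du Di An _ HZ.
  apply/matrixP => r j; have := congr1 (fun v : 'cV[R]_n => v r 0) (Z0 j).
  by rewrite !mxE.
pose T := \matrix_(r, i) p i r 0.
have [M HM] := @Lmap_surj R N n D A inj T.
pose X j := col j M.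
pose S (X : 'I_N -> 'cV[R]_n) := \sum_(j < N) gauss_weight tau j *: (A j *m X j).
pose Y := q + S X.
have sysX : forall i, \sum_j D i j *: X j - A i *m X i = p i.
  move=> i; rewrite /X Lmap_col HM; apply/matrixP => r c.
  by rewrite (ord1 c) !mxE.
have bX : bvnorm X <= 4 * bvnorm p := @sys_bound R N n D A Du Di An X p sysX.
have c0 : 0 <= bvnorm p := bvnorm_ge0 _ _ _ p.
have q0 : 0 <= vnorm q := vnorm_ge0 _ _ q.
exists X, Y; split.
- by split => //; rewrite /Y addrK.
- move=> X' Y' [H1 H2].
  have HZ i : \sum_j D i j *: (X' j - X j) - A i *m (X' i - X i) = 0.
    under eq_bigr do rewrite scalerBr.
    by rewrite sumrB mulmxBr zmod_rearr H1 sysX subrr.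
  have hX j : X' j = X j by apply/eqP; rewrite -subr_eq0; apply/eqP; exact: @zero_sol R N n D A Du Di An _ HZ j.
  split => //.
  have E : \sum_(j < N) gauss_weight tau j *: (A j *m X' j) = S X.
    by apply: eq_bigr => j _; rewrite hX.
  by rewrite E in H2; rewrite /Y -H2 subrK.
- move=> j; apply: le_trans (bvnorm_entry _ _ _ X j) _.
  by apply: le_trans bX _; rewrite lerDl.
- apply: le_trans; first exact: vnormD.
  rewrite addrC lerD2r.
  apply: le_trans; first exact: vnorm_sum.
  apply: (@le_trans _ _ (\sum_j gauss_weight tau j * bvnorm p)).
    apply: ler_sum => j _; apply: le_trans; first exact: vnormZ.
    rewrite ger0_norm ?weight_ge0 //; apply: ler_wpM2l; first exact: weight_ge0.
    apply: le_trans; first exact: vnorm_mul.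
    have := le_trans (bvnorm_entry _ _ _ X j) bX.
    have := An j; have := mnorm_ge0 _ _ _ (A j); have := vnorm_ge0 _ _ (X j); nra.
  rewrite -mulr_suml weight_sum //; lra.
Qed.
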